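(* Let $\mathcal{X}$ be a compact design space and, for $i=1,\dots,\nu$, let $\eta_i(x,\theta_i)$ be regression functions with parameters $\theta_i$ in compact sets $\Theta_i\subset\mathbb{R}^{d_i}$, such that for each $i$ the function $\eta_i(\cdot,\theta_i)$ is continuously differentiable with respect to $\theta_i\in\Theta_i$. Let $p_{i,j}\ge0$ be weights and $\overline{\theta}_i\in\Theta_i$ fixed parameter values, and let $$T_{\mathrm{P}}(\xi)=\sum_{i,j=1}^{\nu}p_{i,j}\inf_{\theta_{i,j}\in\Theta_j}\int_{\mathcal{X}}\big[\eta_i(x,\overline{\theta}_i)-\eta_j(x,\theta_{i,j})\big]^2\,\xi(dx).$$ If a design $\xi$ is not locally $T_{\mathrm{P}}$-optimal, then there exists a point $\overline{x}\in\mathcal{X}$ such that $\Psi(\overline{x},\xi)>T_{\mathrm{P}}(\xi)$.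
   Context: A design is a probability measure on $\mathcal{X}$ with finite support; a design is locally $T_{\mathrm{P}}$-optimal if it maximizes $T_{\mathrm{P}}$ over all designs on $\mathcal{X}$. For a design $\xi$ let $\Theta^*_{i,j}(\xi)=\arg\inf_{\theta_{i,j}\in\Theta_j}\int_{\mathcal{X}}[\eta_i(x,\overline{\theta}_i)-\eta_j(x,\theta_{i,j})]^2\xi(dx)$. Let $\hat\mu_{i,j}(\xi)$ ($i,j=1,\dots,\nu$) be probability measures on the sets $\Theta^*_{i,j}(\xi)$ for which the quantity $$\max_{x\in\mathcal{X}}\sum_{i,j=1}^{\nu}p_{i,j}\int_{\Theta^*_{i,j}(\xi)}\big[\eta_i(x,\overline{\theta}_i)-\eta_j(x,\theta_{i,j})\big]^2\mu_{i,j}(d\theta_{i,j})$$ attains its minimal value over all such families $(\mu_{i,j})$, and define $$\Psi(x,\xi)=\sum_{i,j=1}^{\nu}p_{i,j}\int_{\Theta^*_{i,j}(\xi)}\big[\eta_i(x,\overline{\theta}_i)-\eta_j(x,\theta_{i,j})\big]^2\hat\mu_{i,j}(\xi)(d\theta_{i,j}).$$ *)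

(* Defs.v *)
From HB Require Import structures.
From mathcomp Require Import all_boot all_order all_algebra.
From mathcomp Require Import all_classical all_reals all_analysis.
Unset Printing Implicit Defensive.
Import Order.TTheory GRing.Theory Num.Theory numFieldNormedType.Exports.
Local Open Scope classical_set_scope.
Local Open Scope ring_scope.

Definition paramSpace (R : realType) (n : nat) :=
  g_sigma_algebraType (@open 'rV[R]_n).

Section Design.
Variables (R : realType) (T : topologicalType).

(* A design: a finitely supported probability measure on X, given as a finite
   list of (support point, weight) pairs. *)
Definition is_design (X : set T) (s : seq (T * R)) : Prop :=
  (forall q, q \in s -> X q.1 /\ 0 <= q.2) /\ \sum_(q <- s) q.2 = 1.

Definition dint (s : seq (T * R)) (f : T -> R) : R :=
  \sum_(q <- s) q.2 * f q.1.
End Design.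
Arguments is_design {R T}.
Arguments dint {R T}.

Section TP.
Variables (R : realType) (T : topologicalType) (X : set T) (nu : nat)
  (d : 'I_nu -> nat) (Theta : forall i : 'I_nu, set 'rV[R]_(d i))
  (eta : forall i : 'I_nu, T -> 'rV[R]_(d i) -> R)
  (p : 'I_nu -> 'I_nu -> R) (thbar : forall i : 'I_nu, 'rV[R]_(d i)).

Definition loss (i j : 'I_nu) (s : seq (T * R)) (t : 'rV[R]_(d j)) : R :=
  dint s (fun x => (eta i x (thbar i) - eta j x t) ^+ 2).

Definition TP (s : seq (T * R)) : R :=
  \sum_(i < nu) \sum_(j < nu) p i j * inf [set loss i j s t | t in Theta j].

Definition locally_TP_optimal (s : seq (T * R)) : Prop :=
  is_design X s /\ forall s', is_design X s' -> TP s' <= TP s.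

Definition Theta_star (i j : 'I_nu) (s : seq (T * R)) : set 'rV[R]_(d j) :=
  [set t | Theta j t /\ loss i j s t = inf [set loss i j s t' | t' in Theta j]].

Definition meas_family := forall i j : 'I_nu, probability (paramSpace R (d j)) R.

Definition admissible (s : seq (T * R)) (mu : meas_family) : Prop :=
  forall i j : 'I_nu, mu i j (Theta_star i j s : set (paramSpace R (d j))) = 1%E.

Definition Psi_mu (s : seq (T * R)) (mu : meas_family) (x : T) : \bar R :=
  (\sum_(i < nu) \sum_(j < nu) (p i j)%:E *
     \int[mu i j]_(t in (Theta_star i j s : set (paramSpace R (d j))))
        ((eta i x (thbar i) - eta j x t) ^+ 2)%:E)%E.

Definition maxPsi (s : seq (T * R)) (mu : meas_family) : \bar R :=
  ereal_sup [set Psi_mu s mu x | x in X].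

Definition is_hat_mu (s : seq (T * R)) (mu : meas_family) : Prop :=
  admissible s mu /\
  forall mu', admissible s mu' -> (maxPsi s mu <= maxPsi s mu')%E.
End TP.
Arguments loss {R T nu d}.
Arguments TP {R T nu d}.
Arguments locally_TP_optimal {R T} X {nu d}.
Arguments Theta_star {R T nu d}.
Arguments meas_family {R nu}.
Arguments admissible {R T nu d}.
Arguments Psi_mu {R T nu d}.
Arguments maxPsi {R T} X {nu d}.
Arguments is_hat_mu {R T} X {nu d}.

(* Main.v *)
Require Import Defs.
From HB Require Import structures.
From mathcomp Require Import all_boot all_order all_algebra.
From mathcomp Require Import all_classical all_reals all_analysis.
From mathcomp Require Import measurable_realfun.
Import Order.TTheory GRing.Theory Num.Theory numFieldNormedType.Exports.
Local Open Scope classical_set_scope.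
Local Open Scope ring_scope.

Section S.
Variables (R : realType) (n : nat).
Local Notation V := 'rV[R]_n.

Lemma open_pmeas (A : set V) : open A -> measurable (A : set (paramSpace R n)).
Proof. by move=> oA; apply: sub_sigma_algebra. Qed.

Lemma closed_pmeas (A : set V) : closed A -> measurable (A : set (paramSpace R n)).
Proof. move=> cA; rewrite -[A]setCK; apply: measurableC; apply: open_pmeas.
exact: closed_openC. Qed.

Lemma compact_pmeas (A : set V) : compact A -> measurable (A : set (paramSpace R n)).
Proof. move=> cA; apply: closed_pmeas; apply: compact_closed => //. Qed.

Lemma loc_open (D : set V) (f : V -> R) (U : set R) :
  (forall t, D t -> {for t, continuous f}) -> open U ->
  D `&` f @^-1` U = D `&` interior (f @^-1` U).
Proof.
move=> cf oU; apply/seteqP; split => t [Dt Ht]; split => //.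
  have := cf t Dt. move=> /(_ U) H. apply: H. exact: open_nbhs_nbhs.
exact: interior_subset.
Qed.

Lemma cont_pmeas (D : set V) (f : V -> R) :
  measurable (D : set (paramSpace R n)) ->
  (forall t, D t -> {for t, continuous f}) ->
  measurable_fun (D : set (paramSpace R n)) f.
Proof.
move=> mD cf; apply: (measurability _ (measurable_realfun.RGenOpens.measurableE R)).
move=> _ [_ [x [y ->]] <-].
rewrite (loc_open _ _ _ cf); last by apply: interval_open.
apply: measurableI => //; apply: open_pmeas; exact: open_interior.
Qed.
End S.

Section H.
Variables (R : realType) (n : nat) (T : topologicalType).
Local Notation V := 'rV[R]_n.

Lemma sum_cont (s : seq (T * R)) (c : T -> R) (g : T -> V -> R) (t : V) :
  (forall q, q \in s -> {for t, continuous (g q.1)}) ->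
  {for t, continuous (fun u => \sum_(q <- s) q.2 * (c q.1 - g q.1 u) ^+ 2)}.
Proof.
elim: s => [|q s IH] H.
  rewrite (_ : (fun _ => _) = cst 0); first exact: cst_continuous.
  by apply: funext => u; rewrite big_nil.
rewrite (_ : (fun _ => _) = (fun u => q.2 * (c q.1 - g q.1 u) ^+ 2 +
    \sum_(q <- s) q.2 * (c q.1 - g q.1 u) ^+ 2)); last first.
  by apply: funext => u; rewrite big_cons.
have Hq : {for t, continuous (g q.1)} by apply: H; rewrite mem_head.
have Hs : forall q', q' \in s -> q' \in q :: s by move=> q' Hq'; rewrite in_cons Hq' orbT.
have IH' := IH (fun q' Hq' => H q' (Hs q' Hq')).
have C : {for t, continuous (fun _ : V => c q.1)} by apply: cst_continuous.
have Cb : {for t, continuous (fun _ : V => q.2)} by apply: cst_continuous.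
have H1 := continuousB C Hq.
have H2 := continuousM H1 H1.
have H3 := continuousM Cb H2.
have H4 := continuousD H3 IH'.
exact H4.
Qed.

Lemma sum_meas (D : set (paramSpace R n))
  (s : seq (T * R)) (h : T * R -> paramSpace R n -> \bar R) :
  (forall q, q \in s -> measurable_fun D (h q)) ->
  measurable_fun D (fun t => \sum_(q <- s) h q t)%E.
Proof.
elim: s => [|q s IH] Hm.
  by under eq_fun do rewrite big_nil; exact: measurable_cst.
have Hs : forall q', q' \in s -> q' \in q :: s by move=> q' Hq'; rewrite in_cons Hq' orbT.
under eq_fun do rewrite big_cons.
apply: emeasurable_funD; first by apply: Hm; rewrite mem_head.
by apply: IH => q' Hq'; apply: Hm; exact: Hs.
Qed.

Lemma int_sum (mu : {measure set (paramSpace R n) -> \bar R}) (D : set (paramSpace R n))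
  (mD : measurable (D : set (paramSpace R n)))
  (s : seq (T * R)) (h : T * R -> paramSpace R n -> \bar R) :
  (forall q, q \in s -> measurable_fun D (h q)) ->
  (forall q, q \in s -> forall t, D t -> (0 <= h q t)%E) ->
  (\int[mu]_(t in (D : set (paramSpace R n))) (\sum_(q <- s) h q t) =
   \sum_(q <- s) \int[mu]_(t in (D : set (paramSpace R n))) h q t)%E.
Proof.
elim: s => [|q s IH] Hm H0.
  by under eq_integral do rewrite big_nil; rewrite big_nil integral0.
under eq_integral do rewrite big_cons.
have Hs : forall q', q' \in s -> q' \in q :: s by move=> q' Hq'; rewrite in_cons Hq' orbT.
rewrite big_cons ge0_integralD //.
- rewrite IH // => q' Hq'; [exact: Hm (Hs _ Hq') | exact: H0 (Hs _ Hq')].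
- by apply: H0; rewrite mem_head.
- by apply: Hm; rewrite mem_head.
- by move=> t Dt; rewrite big_seq; apply: sume_ge0 => q' Hq'; apply: H0 => //; exact: Hs.
- by apply: sum_meas => q' Hq'; apply: Hm; exact: Hs.
Qed.
End H.

Lemma sq_cont (R : realType) (n : nat) (c : R) (g : 'rV[R]_n -> R) (t : 'rV[R]_n) :
  {for t, continuous g} -> {for t, continuous (fun u => (c - g u) ^+ 2)}.
Proof.
move=> Hg.
have C : {for t, continuous (fun _ : 'rV[R]_n => c)} by apply: cst_continuous.
have H1 := continuousB C Hg.
have H2 := continuousM H1 H1.
exact H2.
Qed.

Theorem corollary2p3 (R : realType) (T : topologicalType) (X : set T)
  (nu : nat) (d : 'I_nu -> nat) (Theta : forall i : 'I_nu, set 'rV[R]_(d i))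
  (eta : forall i : 'I_nu, T -> 'rV[R]_(d i) -> R)
  (p : 'I_nu -> 'I_nu -> R) (thbar : forall i : 'I_nu, 'rV[R]_(d i)) :
  compact X ->
  (forall i, compact (Theta i)) ->
  (forall i x, X x ->
     (forall t, Theta i t -> differentiable (eta i x) t) /\
     (forall v : 'rV[R]_(d i), {within Theta i, continuous ('D_v (eta i x))})) ->
  (forall i j, 0 <= p i j) ->
  (forall i, Theta i (thbar i)) ->
  forall xi : seq (T * R), is_design X xi ->
  ~ locally_TP_optimal X Theta eta p thbar xi ->
  forall muhat : meas_family d,
  is_hat_mu X Theta eta p thbar xi muhat ->
  exists xbar, X xbar /\
    ((TP Theta eta p thbar xi)%:E < Psi_mu Theta eta p thbar xi muhat xbar)%E.
Proof.
move=> cX cTh Hd p0 thb xi dxi nopt mu [adm _].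
apply: contrapT => Hno; apply: nopt; split => // s' ds'.
have Hle : forall x, X x ->
    (Psi_mu Theta eta p thbar xi mu x <= (TP Theta eta p thbar xi)%:E)%E.
  by move=> x Xx; rewrite leNgt; apply/negP => H; apply: Hno; exists x.
have ct : forall j x, X x -> forall t, Theta j t -> {for t, continuous (eta j x)}.
  by move=> j x Xx t Tt; apply: differentiable_continuous; exact: (Hd j x Xx).1.
have lossc : forall s, (forall q, q \in s -> X q.1) -> forall i j t, Theta j t ->
    {for t, continuous (loss eta thbar i j s)}.
  move=> s Hs i j t Tt.
  apply: (@sum_cont R (d j) T s (fun x => eta i x (thbar i)) (fun x => eta j x) t) => q Hq.
  exact: ct (Hs q Hq) t Tt.
have Xxi : forall q, q \in xi -> X q.1 by move=> q Hq; exact: (dxi.1 q Hq).1.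
have Xs' : forall q, q \in s' -> X q.1 by move=> q Hq; exact: (ds'.1 q Hq).1.
have mD : forall i j, measurable
    (Theta_star Theta eta thbar i j xi : set (paramSpace R (d j))).
  move=> i j.
  have -> : Theta_star Theta eta thbar i j xi = Theta j `&`
      (loss eta thbar i j xi) @^-1` [set inf [set loss eta thbar i j xi t | t in Theta j]].
    by apply/seteqP; split => t [].
  have mT := compact_pmeas R (d j) (Theta j) (cTh j).
  have mf := cont_pmeas R (d j) (Theta j) (loss eta thbar i j xi) mT
    (fun t Tt => lossc xi Xxi i j t Tt).
  exact: mf mT _ (measurable_set1 _).
have key : forall i j,
  ((inf [set loss eta thbar i j s' t | t in Theta j])%:E <=
   \sum_(q <- s') q.2%:E * \int[mu i j]_(t in
      (Theta_star Theta eta thbar i j xi : set (paramSpace R (d j))))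
       ((eta i q.1 (thbar i) - eta j q.1 t) ^+ 2)%:E)%E.
  move=> i j.
  set D := (Theta_star Theta eta thbar i j xi : set (paramSpace R (d j))).
  have DT : forall t, D t -> Theta j t by move=> t [].
  have mg : forall x, X x -> measurable_fun D
      (fun t => ((eta i x (thbar i) - eta j x t) ^+ 2)%:E).
    move=> x Xx; apply/measurable_EFinP.
    apply: (cont_pmeas R (d j) D _ (mD i j)) => t Dt.
    apply: sq_cont; exact: ct Xx t (DT t Dt).
  have E1 : (\sum_(q <- s') q.2%:E * \int[mu i j]_(t in D)
       ((eta i q.1 (thbar i) - eta j q.1 t) ^+ 2)%:E =
      \int[mu i j]_(t in D) (loss eta thbar i j s' t)%:E)%E.
    rewrite /loss /dint.
    under eq_integral do rewrite -sumEFin.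
    rewrite (int_sum _ _ _ (mu i j) D (mD i j)); last first.
    - move=> q Hq t Dt; rewrite lee_fin; apply: mulr_ge0; first exact: (ds'.1 q Hq).2.
      exact: sqr_ge0.
    - move=> q Hq; rewrite (_ : (fun t => _) = (fun t => q.2%:E *
         ((eta i q.1 (thbar i) - eta j q.1 t) ^+ 2)%:E)%E); last first.
        by apply: funext => t; rewrite EFinM.
      apply: emeasurable_funM; first exact: measurable_cst.
      exact: mg (Xs' q Hq).
    rewrite big_seq [in RHS]big_seq; apply: eq_bigr => q Hq.
    rewrite -ge0_integralZl //.
    - exact: mD.
    - exact: mg (Xs' q Hq).
    - by move=> t _; rewrite lee_fin sqr_ge0.
    - by rewrite lee_fin; exact: (ds'.1 q Hq).2.
  rewrite E1.
  set S := [set loss eta thbar i j s' t | t in Theta j].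
  have lb0 : lbound S 0.
    move=> _ [t Tt <-]; rewrite /loss /dint big_seq; apply: sumr_ge0 => q Hq.
    by apply: mulr_ge0; [exact: (ds'.1 q Hq).2 | exact: sqr_ge0].
  have neS : S !=set0 by exists (loss eta thbar i j s' (thbar j)), (thbar j).
  have inf0 : 0 <= inf S := lb_le_inf neS lb0.
  have infle : forall t, Theta j t -> inf S <= loss eta thbar i j s' t.
    move=> t Tt; apply: (ge_inf (ex_intro _ 0 lb0)); by exists t.
  have Hc := @integral_cst _ _ _ (mu i j) D (mD i j) (inf S)%:E.
  have HD : mu i j D = 1%E := adm i j.
  have E2 : ((inf S)%:E * mu i j D = (inf S)%:E)%E by rewrite HD mule1.
  rewrite -E2 -Hc.
  apply: ge0_le_integral => //.
  - exact: mD.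
  - apply/measurable_EFinP.
    apply: (cont_pmeas R (d j) D _ (mD i j)) => t Dt.
    exact: lossc s' Xs' i j t (DT t Dt).
  - by move=> t Dt; rewrite lee_fin; apply: infle; exact: DT.
pose Ig := fun (q : T * R) (i j : 'I_nu) => (\int[mu i j]_(t in
      (Theta_star Theta eta thbar i j xi : set (paramSpace R (d j))))
       ((eta i q.1 (thbar i) - eta j q.1 t) ^+ 2)%:E)%E.
have Ig0 : forall q i j, (0 <= Ig q i j)%E.
  by move=> q i j; apply: integral_ge0 => t _; rewrite lee_fin sqr_ge0.
have pIg0 : forall q i j, (0 <= (p i j)%:E * Ig q i j)%E.
  by move=> q i j; apply: mule_ge0; [rewrite lee_fin; exact: p0 | exact: Ig0].
rewrite -lee_fin.
apply: (@le_trans _ _ (\sum_(q <- s') q.2%:E * Psi_mu Theta eta p thbar xi mu q.1)%E).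
  rewrite /TP -sumEFin.
  apply: (@le_trans _ _ (\sum_(i < nu) \sum_(j < nu) \sum_(q <- s')
     q.2%:E * ((p i j)%:E * Ig q i j))%E).
    apply: lee_sum => i _; rewrite -sumEFin; apply: lee_sum => j _.
    rewrite EFinM.
    apply: le_trans (lee_wpmul2l _ (key i j)) _; first by rewrite lee_fin; exact: p0.
    rewrite big_seq ge0_sume_distrr; last first.
      move=> q Hq; apply: mule_ge0; [rewrite lee_fin; exact: (ds'.1 q Hq).2 | exact: Ig0].
    rewrite [X in (_ <= X)%E]big_seq.
    by apply: lee_sum => q _; rewrite muleCA /Ig.
  under eq_bigr do rewrite exchange_big.
  rewrite exchange_big; apply: lee_sum => q _.
  rewrite /Psi_mu ge0_sume_distrr; last by move=> i _; apply: sume_ge0 => j _; exact: pIg0.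
  apply: lee_sum => i _; rewrite ge0_sume_distrr //.
  by move=> j _; exact: pIg0.
rewrite big_seq.
apply: le_trans.
  apply: lee_sum => q Hq; apply: lee_wpmul2l; last exact: Hle (Xs' q Hq).
  by rewrite lee_fin; exact: (ds'.1 q Hq).2.
under eq_bigr do rewrite -EFinM.
by rewrite sumEFin -big_seq -mulr_suml ds'.2 mul1r.
Qed.
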